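(* For every fixed integer $K\ge 1$, \[ \sum_{k=0}^{m-2}\zeta(m-k,\{1\}_k)=\sum_{j=1}^{K}\binom{2j}{j}\frac{1}{j^{m}}+O\!\left((K+1)^{-m}\right)\qquad(m\to\infty), \] i.e. $\sum_{k=0}^{m-2}\zeta(m-k,\{1\}_k)\approx 2+\frac{6}{2^m}+\frac{20}{3^m}+\frac{70}{4^m}+\cdots$. In particular, the average of the $m-1$ numbers $\zeta(m),\zeta(m-1,1),\dots,\zeta(2,\{1\}_{m-2})$ is asymptotic to $2/m$ as $m\to\infty$.
   Context: For positive integers $s_1\ge 2, s_2,\dots,s_l$, the multiple zeta value is $\zeta(s_1,\dots,s_l):=\sum_{n_1>n_2>\cdots>n_l>0} n_1^{-s_1}\cdots n_l^{-s_l}$. The notation $\{1\}_k$ denotes the string $1,1,\dots,1$ ($k$ times); for $k=0$ it is empty. *)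

(* Defs.v *)
From Stdlib Require Import Reals List ClassicalEpsilon.
Open Scope R_scope.

Fixpoint sumR (f : nat -> R) (N : nat) : R :=
  match N with
  | O => 0
  | S N' => sumR f N' + f (S N')
  end.

(* Truncated multiple zeta sum:
   mzv_trunc [s1;...;sl] N = sum_{N >= n1 > n2 > ... > nl > 0} n1^-s1 ... nl^-sl *)
Fixpoint mzv_trunc (s : list nat) (N : nat) : R :=
  match s with
  | nil => 1
  | s1 :: rest => sumR (fun n => / (INR n ^ s1) * mzv_trunc rest (n - 1)) N
  end.

(* The multiple zeta value: the limit of the truncated sums as N -> oo
   (chosen by epsilon; it exists whenever s1 >= 2). *)
Definition mzv (s : list nat) : R :=
  epsilon (inhabits 0) (fun l => Un_cv (fun N => mzv_trunc s N) l).

Definition mzv_height_one_sum (m : nat) : R :=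
  sum_f_R0 (fun k => mzv ((m - k)%nat :: repeat 1%nat k)) (m - 2).

(* Main.v *)
Require Import Defs.
From Stdlib Require Import Reals List.
From Stdlib Require Import Lra Lia Factorial Arith ClassicalEpsilon FunctionalExtensionality.
Open Scope R_scope.


Lemma sumR_S f N : sumR f (S N) = sumR f N + f (S N).
Proof. reflexivity. Qed.

Lemma sumR_ext f g N : (forall n, (1 <= n <= N)%nat -> f n = g n) -> sumR f N = sumR g N.
Proof. induction N; intros H; simpl; auto. rewrite IHN. rewrite H. auto. lia. intros; apply H; lia. Qed.

Lemma sumR_le f g N : (forall n, (1 <= n <= N)%nat -> f n <= g n) -> sumR f N <= sumR g N.
Proof. induction N; intros H; simpl. lra. assert (f (S N) <= g (S N)) by (apply H; lia).
 assert (sumR f N <= sumR g N) by (apply IHN; intros; apply H; lia). lra. Qed.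

Lemma sumR_nonneg f N : (forall n, (1 <= n <= N)%nat -> 0 <= f n) -> 0 <= sumR f N.
Proof. intros H. replace 0 with (sumR (fun _ => 0) N). apply sumR_le; auto.
 induction N; simpl; auto. rewrite IHN; try lra. intros; apply H; lia. Qed.

Lemma sumR_plus f g N : sumR (fun n => f n + g n) N = sumR f N + sumR g N.
Proof. induction N; simpl; lra. Qed.

Lemma sumR_scal c f N : sumR (fun n => c * f n) N = c * sumR f N.
Proof. induction N; simpl; try rewrite IHN; lra. Qed.

Lemma sumR_mono f N M : (forall n, 0 <= f n) -> (N <= M)%nat -> sumR f N <= sumR f M.
Proof. intros H HNM; induction HNM; simpl; auto. lra. specialize (H (S m)); lra. Qed.

Lemma sumR_growing f : (forall n, (1 <= n)%nat -> 0 <= f n) -> Un_growing (sumR f).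
Proof. intros H n; simpl; specialize (H (S n)); assert (0 <= f (S n)) by (apply H; lia); lra. Qed.

Lemma sumR_swap (t : nat -> nat -> R) P Q :
  sumR (fun q => sumR (fun p => t p q) P) Q = sumR (fun p => sumR (fun q => t p q) Q) P.
Proof. revert Q; induction P; intros Q; simpl.
 - induction Q; simpl; lra.
 - rewrite sumR_plus. rewrite IHP. reflexivity. Qed.

Lemma sumR_f0_swap (t : nat -> nat -> R) L N :
  sum_f_R0 (fun k => sumR (fun n => t k n) N) L = sumR (fun n => sum_f_R0 (fun k => t k n) L) N.
Proof. induction L; simpl. reflexivity. rewrite IHL, <- sumR_plus. reflexivity. Qed.

Lemma has_ub_le (U : nat -> R) B : (forall n, U n <= B) -> has_ub U.
Proof. intros H. exists B. intros x [i ->]. apply H. Qed.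

Lemma cv_sumR_finite (u : nat -> nat -> R) (l : nat -> R) Q :
  (forall q, Un_cv (fun P => u q P) (l q)) -> Un_cv (fun P => sumR (fun q => u q P) Q) (sumR l Q).
Proof. intros H; induction Q; simpl.
 - intros e He; exists 0%nat; intros; unfold Rdist; rewrite Rminus_diag, Rabs_R0; auto.
 - apply CV_plus; auto. Qed.

Lemma cv_sumf0_finite (u : nat -> nat -> R) (l : nat -> R) Q :
  (forall q, (q <= Q)%nat -> Un_cv (fun P => u q P) (l q)) -> Un_cv (fun P => sum_f_R0 (fun q => u q P) Q) (sum_f_R0 l Q).
Proof. intros H; induction Q; simpl. apply H; lia. apply CV_plus; auto. Qed.

Lemma fub_half (t : nat -> nat -> R) (f g : nat -> R) L :
  (forall p q, 0 <= t p q) ->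
  (forall q, Un_cv (sumR (fun p => t p q)) (g q)) ->
  (forall p, Un_cv (sumR (t p)) (f p)) ->
  Un_cv (sumR f) L -> forall Q, sumR g Q <= L.
Proof.
 intros Ht Hg Hf HL Q.
 assert (Hf0 : forall p, 0 <= f p).
 { intros p. apply Rle_cv_lim with (fun _ => 0) (sumR (t p)); auto.
   intros; apply sumR_nonneg; auto. intros e He; exists 0%nat; intros; unfold Rdist; rewrite Rminus_diag, Rabs_R0; auto. }
 assert (Hc := cv_sumR_finite (fun q P => sumR (fun p => t p q) P) g Q Hg).
 apply Rle_cv_lim with (2 := Hc) (Vn := fun _ => L).
 2: { intros e He; exists 0%nat; intros; unfold Rdist; rewrite Rminus_diag, Rabs_R0; auto. }
 intros P; simpl. rewrite sumR_swap.
 apply Rle_trans with (sumR f P).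
 - apply sumR_le; intros p _. apply growing_ineq; auto. apply sumR_growing; auto; intros; auto.
 - apply growing_ineq; auto. apply sumR_growing; auto; intros; auto.
Qed.

Lemma fubini (t : nat -> nat -> R) (f g : nat -> R) L :
  (forall p q, 0 <= t p q) ->
  (forall q, Un_cv (sumR (fun p => t p q)) (g q)) ->
  (forall p, Un_cv (sumR (t p)) (f p)) ->
  Un_cv (sumR f) L -> Un_cv (sumR g) L.
Proof.
 intros Ht Hg Hf HL.
 assert (H1 := fub_half t f g L Ht Hg Hf HL).
 assert (Hg0 : forall q, 0 <= g q).
 { intros q. apply Rle_cv_lim with (fun _ => 0) (sumR (fun p => t p q)); auto.
   intros; apply sumR_nonneg; auto. intros e He; exists 0%nat; intros; unfold Rdist; rewrite Rminus_diag, Rabs_R0; auto. }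
 destruct (growing_cv (sumR g)) as [L' HL']. apply sumR_growing; auto; intros; auto.
 apply has_ub_le with L; auto.
 assert (H2 := fub_half (fun q p => t p q) g f L' (fun q p => Ht p q) Hf Hg HL').
 assert (L' <= L). { apply Rle_cv_lim with (sumR g) (fun _ => L); auto.
   intros e He; exists 0%nat; intros; unfold Rdist; rewrite Rminus_diag, Rabs_R0; auto. }
 assert (L <= L'). { apply Rle_cv_lim with (sumR f) (fun _ => L'); auto.
   intros e He; exists 0%nat; intros; unfold Rdist; rewrite Rminus_diag, Rabs_R0; auto. }
 replace L with L' by lra. auto.
Qed.

Lemma div_nonneg a b : 0 <= a -> 0 <= b -> 0 <= a / b.
Proof. intros Ha Hb. destruct (Req_dec b 0) as [->|Hb0].
 unfold Rdiv; rewrite Rinv_0; lra.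
 apply Rmult_le_pos; auto. left; apply Rinv_0_lt_compat; lra. Qed.

Lemma inv_nonneg b : 0 <= b -> 0 <= / b.
Proof. intros; replace (/b) with (1/b) by (unfold Rdiv; ring); apply div_nonneg; lra. Qed.

Definition e k n := mzv_trunc (repeat 1%nat k) n.

Lemma e0 n : e 0 n = 1.
Proof. reflexivity. Qed.
Lemma eS0 k : e (S k) 0 = 0.
Proof. reflexivity. Qed.
Lemma eSS k n : e (S k) (S n) = e (S k) n + e k n / INR (S n).
Proof. unfold e; simpl. rewrite Nat.sub_0_r, Rmult_1_r. unfold Rdiv. ring. Qed.

Lemma INR_S_pos n : 0 < INR (S n).
Proof. apply lt_0_INR; lia. Qed.

Lemma e_nonneg k n : 0 <= e k n.
Proof. revert k; induction n; intros [|k]; try (rewrite e0; lra); try (rewrite eS0; lra).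
 rewrite eSS. assert (0 <= e k n) by auto. specialize (IHn (S k)).
 assert (0 < INR (S n)) by apply INR_S_pos.
 assert (0 <= e k n / INR (S n)) by (apply div_nonneg; lra). lra. Qed.

Lemma e_zero k n : (n < k)%nat -> e k n = 0.
Proof. revert k; induction n; intros [|k] H; try lia. apply eS0.
 rewrite eSS, IHn, IHn; try lia. unfold Rdiv; ring. Qed.

Fixpoint Px (x : R) (N : nat) : R :=
  match N with O => 1 | S N' => Px x N' * (1 + x / INR (S N')) end.

Lemma Px_ge1 x N : 0 <= x -> 1 <= Px x N.
Proof. intros Hx; induction N. simpl; lra.
 change (Px x (S N)) with (Px x N * (1 + x / INR (S N))).
 assert (0 <= x / INR (S N)) by (apply div_nonneg; auto; left; apply INR_S_pos).
 assert (0 <= Px x N * (x / INR (S N))) by (apply Rmult_le_pos; lra).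
 rewrite Rmult_plus_distr_l, Rmult_1_r. lra. Qed.

Lemma GS0 x K : sum_f_R0 (fun k => x ^ k * e k 0) K = 1.
Proof. induction K; simpl. rewrite e0; ring. rewrite IHK, eS0; ring. Qed.

Lemma GSrec x N K : sum_f_R0 (fun k => x ^ k * e k (S N)) (S K) =
  sum_f_R0 (fun k => x ^ k * e k N) (S K) + x / INR (S N) * sum_f_R0 (fun k => x ^ k * e k N) K.
Proof. assert (0 < INR (S N)) by apply INR_S_pos.
 induction K.
 - cbn [sum_f_R0]. rewrite !e0, eSS, e0. cbn [pow]. field. lra.
 - cbn [sum_f_R0] in *. rewrite IHK. rewrite (eSS (S K)). cbn [pow]. field. lra.
Qed.

Lemma Px_S x N : Px x (S N) = Px x N * (1 + x / INR (S N)).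
Proof. reflexivity. Qed.

Lemma GS_le x N K : 0 <= x -> sum_f_R0 (fun k => x ^ k * e k N) K <= Px x N.
Proof. intros Hx. revert K; induction N; intros K.
 - rewrite GS0. simpl; lra.
 - destruct K. cbn [sum_f_R0 pow]. rewrite e0. assert (H := Px_ge1 x (S N) Hx). lra.
   rewrite GSrec, Px_S. assert (H1 := IHN (S K)); assert (H2 := IHN K).
   assert (0 <= x / INR (S N)) by (apply div_nonneg; auto; left; apply INR_S_pos).
   rewrite Rmult_plus_distr_l, Rmult_1_r.
   assert (x / INR (S N) * sum_f_R0 (fun k : nat => x ^ k * e k N) K <= Px x N * (x / INR (S N))).
   { rewrite Rmult_comm. apply Rmult_le_compat_r; auto. }
   lra.
Qed.

Lemma GS_eq x N K : (N <= K)%nat -> sum_f_R0 (fun k => x ^ k * e k N) K = Px x N.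
Proof. revert K; induction N; intros K HK.
 - rewrite GS0. reflexivity.
 - destruct K. lia.
   rewrite GSrec, Px_S, IHN, IHN by lia. ring.
Qed.

Lemma P1 N : Px 1 N = INR N + 1.
Proof. induction N. simpl; lra. rewrite Px_S, IHN, S_INR. field.
 assert (0 <= INR N) by apply pos_INR. lra. Qed.

Lemma Px_fact n N : Px (INR n) N * INR (fact N) * INR (fact n) = INR (fact (N + n)).
Proof. induction N. simpl. ring.
 rewrite Px_S. replace (S N + n)%nat with (S (N + n)) by lia.
 rewrite (fact_simpl (N+n)), (fact_simpl N), !mult_INR, <- IHN.
 rewrite (S_INR (N+n)), S_INR, plus_INR. field.
 assert (0 <= INR N) by apply pos_INR. lra. Qed.

Lemma Pn_C n : (1 <= n)%nat -> 2 * Px (INR n) (n - 1) = C (2 * n) n.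
Proof. intros Hn. destruct n as [|n']. lia. replace (S n' - 1)%nat with n' by lia.
 unfold C. replace (2 * S n' - S n')%nat with (S n') by lia.
 replace (2 * S n')%nat with (S (n' + S n')) by lia.
 rewrite fact_simpl, mult_INR, <- (Px_fact (S n') n').
 rewrite (fact_simpl n'), !mult_INR.
 assert (H1 := INR_fact_lt_0 n'). assert (H2 := INR_fact_lt_0 (S n')).
 rewrite !S_INR, plus_INR, S_INR. field.
 assert (0 <= INR n') by apply pos_INR. split; lra. Qed.

Lemma sum_f_R0_term_le (f : nat -> R) k K : (k <= K)%nat -> (forall i, 0 <= f i) -> f k <= sum_f_R0 f K.
Proof. intros Hk Hf; induction Hk. destruct k; simpl. lra. assert (0 <= sum_f_R0 f k).
 { clear -Hf. induction k; simpl. apply Hf. specialize (Hf (S k)); lra. } lra.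
 simpl; specialize (Hf (S m)); lra. Qed.

Lemma e_le k N : e k N <= INR N + 1.
Proof. rewrite <- P1. eapply Rle_trans. 2: apply (GS_le 1 N k); lra.
 replace (e k N) with (1 ^ k * e k N) by (rewrite pow1; ring).
 apply (sum_f_R0_term_le (fun k => 1 ^ k * e k N)). lia.
 intros; rewrite pow1, Rmult_1_l; apply e_nonneg. Qed.

Definition Cn p q := INR (fact p) * INR (fact q) / INR (fact (p + q)).

Lemma Cn_p0 p : Cn p 0 = 1.
Proof. unfold Cn. rewrite Nat.add_0_r. simpl. field. apply INR_fact_neq_0. Qed.

Lemma Cn_pos p q : 0 < Cn p q.
Proof. unfold Cn. apply Rdiv_lt_0_compat. apply Rmult_lt_0_compat; apply INR_fact_lt_0. apply INR_fact_lt_0. Qed.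

Lemma Cn_sym p q : Cn p q = Cn q p.
Proof. unfold Cn. rewrite Nat.add_comm. unfold Rdiv; ring. Qed.

Lemma Cn_S p q : Cn p (S q) = Cn p q * INR (S q) / INR (p + S q).
Proof. unfold Cn. replace (p + S q)%nat with (S (p + q)) by lia.
 rewrite (fact_simpl q), (fact_simpl (p+q)), !mult_INR.
 assert (H1 := INR_fact_lt_0 q). assert (H2 := INR_fact_lt_0 (p + q)).
 assert (0 < INR (S (p+q))) by apply INR_S_pos. field. lra. Qed.

Lemma Cn_step p q : INR p * (Cn p (S q) / INR (S q)) = Cn p q - Cn p (S q).
Proof. rewrite Cn_S. replace (p + S q)%nat with (S (p + q)) by lia.
 rewrite (S_INR (p+q)), plus_INR, (S_INR q). assert (0 <= INR p) by apply pos_INR.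
 assert (0 <= INR q) by apply pos_INR. field. lra. Qed.

Lemma Cn_lower p q : Cn p q / (INR p + 1) <= Cn p (S q).
Proof. rewrite Cn_S. assert (0 <= INR p) by apply pos_INR. assert (0 <= INR q) by apply pos_INR.
 assert (HC := Cn_pos p q). replace (p + S q)%nat with (S (p + q)) by lia.
 rewrite (S_INR (p+q)), plus_INR, (S_INR q).
 replace (Cn p q * (INR q + 1) / (INR p + INR q + 1)) with (Cn p q * ((INR q + 1) / (INR p + INR q + 1))) by (unfold Rdiv; ring).
 unfold Rdiv at 1. apply Rmult_le_compat_l. lra.
 assert (E : (INR q + 1) / (INR p + INR q + 1) - / (INR p + 1) = INR p * INR q / ((INR p + 1) * (INR p + INR q + 1))) by (field; lra).
 assert (0 <= INR p * INR q / ((INR p + 1) * (INR p + INR q + 1))).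
 { apply div_nonneg. nra. nra. } lra. Qed.

Definition G j p N := sumR (fun q => e j (q - 1) * Cn p q / INR q) N.

Lemma G0_rec p N : INR p * G 0 p N + Cn p N = 1.
Proof. induction N. unfold G; simpl. rewrite Cn_p0. ring.
 unfold G in *. rewrite sumR_S, e0, Rmult_1_l. rewrite Rmult_plus_distr_l, Cn_step. lra. Qed.

Lemma GS_rec j p N : INR p * G (S j) p N + e (S j) N * Cn p N = G j p N.
Proof. induction N. unfold G; simpl. rewrite eS0. ring.
 unfold G in *. rewrite !sumR_S. replace (S N - 1)%nat with N by lia.
 rewrite eSS. rewrite Rmult_plus_distr_l.
 replace (INR p * (e (S j) N * Cn p (S N) / INR (S N))) with (e (S j) N * (INR p * (Cn p (S N) / INR (S N)))) by (unfold Rdiv; ring).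
 rewrite Cn_step. rewrite <- IHN. field. apply Rgt_not_eq, INR_S_pos. Qed.

Lemma G_growing j p : Un_growing (G j p).
Proof. unfold G. apply sumR_growing. intros n _. apply div_nonneg.
 apply Rmult_le_pos. apply e_nonneg. left; apply Cn_pos. apply pos_INR. Qed.

Lemma sumR_tail_lb f N M b : (forall q, (N < q <= N + M)%nat -> b <= f q) ->
  INR M * b <= sumR f (N + M) - sumR f N.
Proof. induction M; intros H. rewrite Nat.add_0_r; simpl; lra.
 replace (N + S M)%nat with (S (N + M)) by lia. rewrite sumR_S, S_INR.
 assert (INR M * b <= sumR f (N + M) - sumR f N) by (apply IHM; intros; apply H; lia).
 assert (b <= f (S (N + M))) by (apply H; lia). lra. Qed.

Lemma key_limit (x y A : nat -> R) (a p d : R) : 0 < p -> 0 < d ->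
  (forall n, 0 <= x n) -> (forall n, 0 <= y n) -> (forall n, d * y n <= x (S n)) ->
  Un_cv A a -> (forall n, A n <= a) ->
  (forall N, p * sumR (fun q => x q / INR q) N + y N = A N) ->
  Un_cv (sumR (fun q => x q / INR q)) (a / p).
Proof.
 intros Hp Hd Hx Hy Hxy HA HAa Hrel.
 set (Sm := sumR (fun q => x q / INR q)).
 assert (Sgr : Un_growing Sm). { apply sumR_growing. intros; apply div_nonneg; auto; apply pos_INR. }
 destruct (growing_cv Sm Sgr) as [L HL].
 { apply has_ub_le with (a / p). intros n. specialize (Hrel n); specialize (HAa n); specialize (Hy n).
   apply Rmult_le_reg_l with p; auto. unfold Sm. field_simplify; lra. }
 assert (Hyc : Un_cv y (a - p * L)).
 { assert (H1 : Un_cv (fun n => p * Sm n) (p * L)).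
   { apply CV_mult; auto. intros e He; exists 0%nat; intros; unfold Rdist; rewrite Rminus_diag, Rabs_R0; auto. }
   assert (H2 := CV_minus _ _ _ _ HA H1). intros e He. destruct (H2 e He) as [N HN]. exists N; intros n Hn.
   specialize (HN n Hn). specialize (Hrel n). unfold Sm in *. replace (y n) with (A n - p * sumR (fun q => x q / INR q) n) by lra. auto. }
 assert (Hc0 : 0 <= a - p * L).
 { apply Rle_cv_lim with (fun _ => 0) y; auto. intros e He; exists 0%nat; intros; unfold Rdist; rewrite Rminus_diag, Rabs_R0; auto. }
 destruct (Rle_lt_or_eq_dec _ _ Hc0) as [Hcp|Hc].
 - exfalso. set (c := a - p * L) in *.
   destruct (Hyc (c/2)) as [N1 HN1]. lra.
   set (h := d * (c / 2)). assert (Hh : 0 < h) by (unfold h; nra).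
   assert (Hxq : forall q, (S N1 <= q)%nat -> h <= x q).
   { intros q Hq. destruct q. lia. specialize (HN1 q ltac:(lia)). unfold Rdist in HN1.
     apply Rabs_def2 in HN1. specialize (Hxy q). unfold h. nra. }
   destruct (HL (h/8)) as [N2 HN2]. lra.
   set (N := S (max (S N1) N2)).
   assert (Htail : INR N * (h / INR (N + N)) <= Sm (N + N)%nat - Sm N).
   { unfold Sm. apply sumR_tail_lb. intros q Hq. unfold Rdiv.
     assert (0 < INR q) by (apply lt_0_INR; lia).
     assert (INR q <= INR (N + N)) by (apply le_INR; lia).
     assert (h <= x q) by (apply Hxq; unfold N in Hq; lia).
     apply Rle_trans with (h * / INR q). apply Rmult_le_compat_l. lra. apply Rinv_le_contravar; lra.
     apply Rmult_le_compat_r. left; apply Rinv_0_lt_compat; lra. auto. }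
   assert (INR N * (h / INR (N + N)) = h / 2).
   { rewrite plus_INR. field. assert (0 < INR N) by (apply lt_0_INR; unfold N; lia). lra. }
   assert (A1 := HN2 (N + N)%nat ltac:(unfold N; lia)). assert (A2 := HN2 N ltac:(unfold N; lia)).
   unfold Rdist in A1, A2. apply Rabs_def2 in A1. apply Rabs_def2 in A2. lra.
 - replace (a / p) with L; auto. apply Rmult_eq_reg_l with p. field_simplify. lra. lra. lra.
Qed.

Lemma Phi j p : (1 <= p)%nat -> Un_cv (G j p) (/ INR p ^ (S j)).
Proof. intros Hp. assert (Hp' : 1 <= INR p) by (apply (le_INR 1); auto).
 assert (Hd : 0 < / (INR p + 1)) by (apply Rinv_0_lt_compat; lra).
 induction j.
 - replace (/ INR p ^ 1) with (1 / INR p) by (simpl; field; lra).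
   apply (key_limit (fun q => e 0 (q - 1) * Cn p q) (fun N => e 0 N * Cn p N) (fun _ => 1) 1 (INR p) (/ (INR p + 1))); try lra.
   + intros; apply Rmult_le_pos. apply e_nonneg. left; apply Cn_pos.
   + intros; apply Rmult_le_pos. apply e_nonneg. left; apply Cn_pos.
   + intros n. rewrite !e0, !Rmult_1_l. rewrite Rmult_comm. apply Cn_lower.
   + intros e' He; exists 0%nat; intros; unfold Rdist; rewrite Rminus_diag, Rabs_R0; auto.
   + intros; lra.
   + intros N. cbv beta. rewrite e0, Rmult_1_l. apply G0_rec.
 - replace (INR p ^ S (S j)) with (INR p ^ S j * INR p) by (cbn [pow]; ring).
   rewrite Rinv_mult. fold (Rdiv (/ INR p ^ S j) (INR p)).
   apply (key_limit (fun q => e (S j) (q - 1) * Cn p q) (fun N => e (S j) N * Cn p N) (G j p) (/ INR p ^ S j) (INR p) (/ (INR p + 1))); try lra; auto.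
   + intros; apply Rmult_le_pos. apply e_nonneg. left; apply Cn_pos.
   + intros; apply Rmult_le_pos. apply e_nonneg. left; apply Cn_pos.
   + intros n. replace (S n - 1)%nat with n by lia.
     assert (H := Cn_lower p n). assert (0 <= e (S j) n) by apply e_nonneg.
     replace (/ (INR p + 1) * (e (S j) n * Cn p n)) with (e (S j) n * (Cn p n / (INR p + 1))) by (unfold Rdiv; ring).
     apply Rmult_le_compat_l; auto.
   + intros; apply growing_ineq; auto. apply G_growing.
   + intros N. apply GS_rec.
Qed.

Lemma mzv_eq s L : Un_cv (mzv_trunc s) L -> mzv s = L.
Proof. intros H. unfold mzv. apply UL_sequence with (mzv_trunc s); auto.
 apply (epsilon_spec (inhabits 0) (fun l => Un_cv (fun N => mzv_trunc s N) l)). exists L; auto. Qed.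

Lemma cv_scal (u : nat -> R) l c : Un_cv u l -> Un_cv (fun N => c * u N) (c * l).
Proof. intros H. apply CV_mult; auto. intros e He; exists 0%nat; intros; unfold Rdist; rewrite Rminus_diag, Rabs_R0; auto. Qed.

Lemma inv_sq_sum N : sumR (fun n => / INR n ^ 2) (S N) <= 2 - / INR (S N).
Proof. induction N. simpl. rewrite Rmult_1_r, Rinv_1. lra.
 rewrite sumR_S. assert (H0 : 0 < INR (S N)) by apply INR_S_pos.
 assert (H1 : INR (S (S N)) = INR (S N) + 1) by apply S_INR.
 assert (/ INR (S (S N)) ^ 2 <= / INR (S N) - / INR (S (S N))).
 { rewrite H1. replace (/ INR (S N) - / (INR (S N) + 1)) with (/ (INR (S N) * (INR (S N) + 1))) by (field; lra).
   apply Rinv_le_contravar. apply Rmult_lt_0_compat; lra. cbn [pow]; nra. }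
 lra. Qed.

Lemma inv_sq_sum2 N : sumR (fun n => / INR n ^ 2) N <= 2.
Proof. destruct N. simpl; lra. assert (H := inv_sq_sum N).
 assert (0 < / INR (S N)) by (apply Rinv_0_lt_compat, INR_S_pos). lra. Qed.

Lemma term_bound s k n : (3 <= s)%nat -> (1 <= n)%nat -> / INR n ^ s * e k (n - 1) <= / INR n ^ 2.
Proof. intros Hs Hn. assert (Hn' : 1 <= INR n) by (apply (le_INR 1); auto).
 assert (He := e_le k (n-1)). rewrite minus_INR in He by auto. simpl INR in He.
 assert (He0 := e_nonneg k (n-1)).
 replace s with (S (S (S (s - 3)))) by lia.
 assert (Hp : 1 <= INR n ^ (s - 3)) by (apply pow_R1_Rle; auto).
 cbn [pow]. rewrite Rmult_1_r.
 assert (0 < INR n * INR n) by nra.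
 apply Rle_trans with (/ (INR n * (INR n * (INR n * INR n ^ (s - 3)))) * INR n).
 apply Rmult_le_compat_l. apply inv_nonneg. assert (0 < INR n ^ (s-3)) by lra. left. repeat apply Rmult_lt_0_compat; lra. lra.
 replace (/ (INR n * (INR n * (INR n * INR n ^ (s - 3)))) * INR n) with (/ (INR n * INR n) * / INR n ^ (s - 3)) by (field; split; lra).
 rewrite <- (Rmult_1_r (/ (INR n * INR n))) at 2. apply Rmult_le_compat_l. apply inv_nonneg; lra.
 rewrite <- Rinv_1. apply Rinv_le_contravar; lra. Qed.

Lemma conv_direct s k : (3 <= s)%nat -> exists L, Un_cv (mzv_trunc (s :: repeat 1%nat k)) L.
Proof. intros Hs. destruct (growing_cv (mzv_trunc (s :: repeat 1%nat k))) as [L HL].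
 - simpl. apply sumR_growing. intros n Hn. apply Rmult_le_pos. apply inv_nonneg, pow_le, pos_INR. apply e_nonneg.
 - apply has_ub_le with 2. intros N. simpl. eapply Rle_trans. 2: apply (inv_sq_sum2 N).
   apply sumR_le. intros n Hn. apply term_bound; lia.
 - exists L; auto. Qed.

Lemma duality a b L : (1 <= a)%nat -> (1 <= b)%nat ->
  Un_cv (mzv_trunc ((a+1)%nat :: repeat 1%nat (b-1))) L ->
  Un_cv (mzv_trunc ((b+1)%nat :: repeat 1%nat (a-1))) L.
Proof. intros Ha Hb H.
 set (t := fun p q => e (b-1) (p-1) / INR p * (e (a-1) (q-1) * Cn p q / INR q)).
 apply (fubini t (fun p => / INR p ^ (a+1) * e (b-1) (p-1)) (fun q => / INR q ^ (b+1) * e (a-1) (q-1)) L).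
 - intros p q. unfold t. apply Rmult_le_pos; apply div_nonneg; try apply pos_INR; try apply e_nonneg.
   apply Rmult_le_pos. apply e_nonneg. left; apply Cn_pos.
 - intros q. destruct q as [|q].
   + replace (sumR (fun p => t p 0%nat)) with (fun _ : nat => 0).
     replace (/ INR 0 ^ (b + 1) * e (a - 1) (0 - 1)) with 0. 2:{ rewrite Nat.add_1_r. cbn [pow INR]. rewrite Rmult_0_l, Rinv_0. ring. } intros e' He; exists 0%nat; intros; unfold Rdist; rewrite Rminus_diag, Rabs_R0; auto.
     apply functional_extensionality_dep. intros N. induction N. reflexivity. simpl sumR. rewrite <- IHN. unfold t. simpl INR. unfold Rdiv at 2. rewrite Rinv_0. ring.
   + replace (sumR (fun p => t p (S q))) with (fun N => e (a-1) (S q - 1) / INR (S q) * G (b-1) (S q) N).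
     replace (/ INR (S q) ^ (b + 1) * e (a - 1) (S q - 1)) with (e (a-1) (S q - 1) / INR (S q) * / INR (S q) ^ (S (b-1))).
     apply cv_scal. apply Phi. lia.
     replace (S (b-1)) with b by lia. rewrite Nat.add_1_r. cbn [pow]. rewrite Rinv_mult. unfold Rdiv. ring.
     apply functional_extensionality_dep. intros N. unfold G. rewrite <- sumR_scal. apply sumR_ext. intros p _.
     unfold t. rewrite (Cn_sym p (S q)). unfold Rdiv; ring.
 - intros p. destruct p as [|p].
   + replace (sumR (t 0%nat)) with (fun _ : nat => 0).
     replace (/ INR 0 ^ (a + 1) * e (b - 1) (0 - 1)) with 0. 2:{ rewrite Nat.add_1_r. cbn [pow INR]. rewrite Rmult_0_l, Rinv_0. ring. } intros e' He; exists 0%nat; intros; unfold Rdist; rewrite Rminus_diag, Rabs_R0; auto.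
     apply functional_extensionality_dep. intros N. induction N. reflexivity. simpl sumR. rewrite <- IHN. unfold t. simpl INR. unfold Rdiv at 1. rewrite Rinv_0. ring.
   + replace (sumR (t (S p))) with (fun N => e (b-1) (S p - 1) / INR (S p) * G (a-1) (S p) N).
     replace (/ INR (S p) ^ (a + 1) * e (b - 1) (S p - 1)) with (e (b-1) (S p - 1) / INR (S p) * / INR (S p) ^ (S (a-1))).
     apply cv_scal. apply Phi. lia.
     replace (S (a-1)) with a by lia. rewrite Nat.add_1_r. cbn [pow]. rewrite Rinv_mult. unfold Rdiv. ring.
     apply functional_extensionality_dep. intros N. unfold G. rewrite <- sumR_scal. apply sumR_ext. intros q _.
     unfold t. unfold Rdiv; ring.
 - exact H.
Qed.

Definition T L n := sum_f_R0 (fun k => INR n ^ k * e k (n - 1)) L.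

Lemma sum_f_R0_ext f g L : (forall k, (k <= L)%nat -> f k = g k) -> sum_f_R0 f L = sum_f_R0 g L.
Proof. induction L; intros H; simpl. apply H; lia. rewrite IHL, H; auto; intros; apply H; lia. Qed.

Lemma sum_f_R0_scal c f L : sum_f_R0 (fun k => c * f k) L = c * sum_f_R0 f L.
Proof. induction L; simpl; try rewrite IHL; ring. Qed.

Lemma sum_f_R0_le f g L : (forall k, (k <= L)%nat -> f k <= g k) -> sum_f_R0 f L <= sum_f_R0 g L.
Proof. induction L; intros H; simpl. apply H; lia. assert (f (S L) <= g (S L)) by (apply H; lia).
 assert (sum_f_R0 f L <= sum_f_R0 g L) by (apply IHL; intros; apply H; lia). lra. Qed.

Lemma seq_ident m L N : (L <= m)%nat ->
  sum_f_R0 (fun k => mzv_trunc ((m - k)%nat :: repeat 1%nat k) N) L =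
  sumR (fun n => / INR n ^ m * T L n) N.
Proof. intros HL. simpl mzv_trunc. rewrite sumR_f0_swap. apply sumR_ext. intros n Hn.
 unfold T. rewrite <- sum_f_R0_scal. apply sum_f_R0_ext. intros k Hk. fold (e k (n-1)).
 assert (0 < INR n) by (apply lt_0_INR; lia).
 replace m with ((m - k) + k)%nat at 2 by lia. rewrite pow_add. rewrite Rinv_mult.
 field. split; apply pow_nonzero; lra. Qed.

Lemma T_full L n : (1 <= n)%nat -> (n <= S L)%nat -> T L n = Px (INR n) (n - 1).
Proof. intros. unfold T. apply GS_eq. lia. Qed.

Lemma T_le_P L n : T L n <= Px (INR n) (n - 1).
Proof. apply GS_le, pos_INR. Qed.

Lemma T_le_pow L n : (1 <= n)%nat -> T L n <= INR n ^ (S L).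
Proof. intros Hn. assert (Hn' : 1 <= INR n) by (apply (le_INR 1); auto).
 unfold T. apply Rle_trans with (sum_f_R0 (fun k => INR n ^ L * (1 ^ k * e k (n - 1))) L).
 - apply sum_f_R0_le. intros k Hk. rewrite pow1, Rmult_1_l. apply Rmult_le_compat_r. apply e_nonneg.
   apply Rle_pow; auto.
 - rewrite sum_f_R0_scal. cbn [pow]. rewrite Rmult_comm. apply Rmult_le_compat_r. apply pow_le; lra.
   eapply Rle_trans. apply GS_le; lra. rewrite P1, minus_INR by auto. simpl. lra.
Qed.

Lemma Un_cv_ext (u v : nat -> R) l : (forall n, u n = v n) -> Un_cv u l -> Un_cv v l.
Proof. intros H Hu e He. destruct (Hu e He) as [N HN]. exists N; intros n Hn. rewrite <- H; auto. Qed.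

Lemma sumR_split f K M : sumR f (K + M) = sumR f K + sumR (fun i => f (K + i)%nat) M.
Proof. induction M. rewrite Nat.add_0_r; simpl; ring.
 rewrite (sumR_S (fun i => f (K + i)%nat) M). replace (K + S M)%nat with (S (K + M)) by lia. rewrite sumR_S, IHM. ring. Qed.

Lemma trunc_sum (a : nat -> R) r M : (1 <= r)%nat ->
  sumR (fun n => if (n <? r)%nat then a n else 0) M = sumR a (Nat.min M (r - 1)).
Proof. intros Hr. induction M. reflexivity.
 rewrite sumR_S, IHM. destruct (S M <? r)%nat eqn:E.
 - apply Nat.ltb_lt in E. replace (Nat.min (S M) (r-1)) with (S (Nat.min M (r-1))) by lia.
   rewrite sumR_S. f_equal. f_equal. lia.
 - apply Nat.ltb_ge in E. replace (Nat.min (S M) (r-1)) with (Nat.min M (r-1)) by lia. ring. Qed.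

Lemma nat_ineq K n m L : ((K+1)^2 <= n)%nat -> (2 * L <= m)%nat -> (L + 3 <= m)%nat -> (6 <= m)%nat ->
  ((K+1)^m * n^(L+3) <= (K+1)^6 * n^m)%nat.
Proof. intros Hn H1 H2 H3.
 assert (E1: ((K+1)^m = (K+1)^6 * (K+1)^(m-6))%nat) by (rewrite <- Nat.pow_add_r; f_equal; lia).
 assert (E2: (n^m = n^(m-(L+3)) * n^(L+3))%nat) by (rewrite <- Nat.pow_add_r; f_equal; lia).
 rewrite E1, E2. rewrite <- Nat.mul_assoc. apply Nat.mul_le_mono_l. apply Nat.mul_le_mono_r.
 apply Nat.le_trans with ((K+1)^(2 * (m - (L+3))))%nat.
 apply Nat.pow_le_mono_r. lia. lia.
 rewrite Nat.pow_mul_r. apply Nat.pow_le_mono_l. auto. Qed.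

Lemma real_ineq x y m L : 1 <= x -> 1 <= y -> y ^ m * x ^ (L + 3) <= y ^ 6 * x ^ m ->
  / x ^ m * x ^ (S L) <= / y ^ m * (y ^ 6 / x ^ 2).
Proof. intros Hx Hy H.
 assert (Hxm : 0 < x ^ m) by (apply pow_lt; lra). assert (Hym : 0 < y ^ m) by (apply pow_lt; lra).
 assert (Hx2 : 0 < x ^ 2) by (apply pow_lt; lra).
 replace (x ^ (L + 3)) with (x ^ S L * x ^ 2) in H by (rewrite <- pow_add; replace (S L + 2)%nat with (L + 3)%nat by lia; reflexivity).
 idtac.
 set (Q := x ^ m * y ^ m * x ^ 2).
 assert (HQ : 0 < Q) by (unfold Q; apply Rmult_lt_0_compat; [apply Rmult_lt_0_compat|]; assumption).
 replace (/ x ^ m * x ^ S L) with ((y ^ m * (x ^ S L * x ^ 2)) * / Q) by (unfold Q; field; lra).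
 replace (/ y ^ m * (y ^ 6 / x ^ 2)) with ((y ^ 6 * x ^ m) * / Q) by (unfold Q; field; lra).
 apply Rmult_le_compat_r. left; apply Rinv_0_lt_compat; auto. auto. Qed.

Definition Aval m K := sumR (fun n => / INR n ^ m * Px (INR n) (n - 1)) K.
Definition B0 K := sumR (fun n => Px (INR n) (n - 1)) ((K+1)^2) + 2 * INR (K+1) ^ 6.

Lemma Px_nonneg x N : 0 <= x -> 0 <= Px x N.
Proof. intros; assert (H0 := Px_ge1 x N H); lra. Qed.

Lemma T_nonneg L n : 0 <= T L n.
Proof. unfold T. clear. induction L; cbn [sum_f_R0]. apply Rmult_le_pos. apply pow_le, pos_INR. apply e_nonneg.
 assert (0 <= INR n ^ S L * e (S L) (n - 1)) by (apply Rmult_le_pos; [apply pow_le, pos_INR| apply e_nonneg]). lra. Qed.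

Lemma cv_lower (u : nat -> R) l a N : Un_cv u l -> (forall n, (N <= n)%nat -> a <= u n) -> a <= l.
Proof. intros Hu H. destruct (Rle_or_lt a l) as [|Hlt]; auto. exfalso.
 destruct (Hu (a - l)) as [N1 HN1]. lra. specialize (HN1 (Nat.max N N1) ltac:(lia)).
 specialize (H (Nat.max N N1) ltac:(lia)). unfold Rdist in HN1. apply Rabs_def2 in HN1. lra. Qed.

Lemma cv_upper (u : nat -> R) l b : Un_cv u l -> (forall n, u n <= b) -> l <= b.
Proof. intros Hu H. apply Rle_cv_lim with u (fun _ => b); auto.
 intros e He; exists 0%nat; intros; unfold Rdist; rewrite Rminus_diag, Rabs_R0; auto. Qed.

Lemma est m L K : (K <= L)%nat -> (2 * L <= m)%nat -> (L + 3 <= m)%nat -> (6 <= m)%nat ->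
  Aval m K <= sum_f_R0 (fun k => mzv ((m - k)%nat :: repeat 1%nat k)) L <= Aval m K + B0 K * / INR (K+1) ^ m.
Proof. intros HKL H2L HL3 H6.
 set (f := fun n => / INR n ^ m * T L n).
 assert (Hf0 : forall n, 0 <= f n) by (intros; unfold f; apply Rmult_le_pos; [apply inv_nonneg, pow_le, pos_INR | apply T_nonneg]).
 assert (Hcv : Un_cv (sumR f) (sum_f_R0 (fun k => mzv ((m - k)%nat :: repeat 1%nat k)) L)).
 { apply Un_cv_ext with (fun N => sum_f_R0 (fun k => mzv_trunc ((m - k)%nat :: repeat 1%nat k) N) L).
   intros N. unfold f. apply seq_ident. lia.
   apply cv_sumf0_finite. intros k Hk.
   destruct (conv_direct (m - k) k) as [l Hl]. lia. rewrite (mzv_eq _ l Hl). exact Hl. }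
 assert (HA : sumR f K = Aval m K).
 { unfold Aval, f. apply sumR_ext. intros n Hn. rewrite T_full; auto; lia. }
 set (y := INR (K + 1)).
 assert (Hy : 1 <= y) by (unfold y; apply (le_INR 1); lia).
 set (r := ((K + 1) ^ 2)%nat).
 set (w := fun n => (if (n <? r)%nat then Px (INR n) (n - 1) else 0) + y ^ 6 * / INR n ^ 2).
 assert (Hw : forall M, sumR w M <= B0 K).
 { intros M. unfold w. rewrite sumR_plus, sumR_scal. unfold B0. fold y. fold r.
   rewrite trunc_sum by (unfold r; simpl; lia).
   assert (sumR (fun n => Px (INR n) (n - 1)) (Nat.min M (r - 1)) <= sumR (fun n => Px (INR n) (n - 1)) r).
   { apply sumR_mono. intros; apply Px_nonneg, pos_INR. lia. }
   assert (y ^ 6 * sumR (fun n => / INR n ^ 2) M <= 2 * y ^ 6).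
   { rewrite Rmult_comm. apply Rmult_le_compat_r. apply pow_le; lra. apply inv_sq_sum2. }
   lra. }
 assert (Hw0 : forall n, 0 <= w n).
 { intros n. unfold w. assert (0 <= y ^ 6 * / INR n ^ 2) by (apply Rmult_le_pos; [apply pow_le; lra| apply inv_nonneg, pow_le, pos_INR]).
   destruct (n <? r)%nat. assert (0 <= Px (INR n) (n-1)) by (apply Px_nonneg, pos_INR). lra. lra. }
 assert (Hpt : forall n, (K + 1 <= n)%nat -> f n <= / y ^ m * w n).
 { intros n Hn. assert (Hn1 : y <= INR n) by (unfold y; apply le_INR; lia).
   assert (Hinv : / INR n ^ m <= / y ^ m).
   { apply Rinv_le_contravar. apply pow_lt; lra. apply pow_incr; lra. }
   unfold f, w. destruct (n <? r)%nat eqn:E.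
   - assert (0 <= y ^ 6 * / INR n ^ 2) by (apply Rmult_le_pos; [apply pow_le; lra| apply inv_nonneg, pow_le, pos_INR]).
     apply Rle_trans with (/ y ^ m * Px (INR n) (n - 1)).
     apply Rle_trans with (/ INR n ^ m * Px (INR n) (n - 1)).
     apply Rmult_le_compat_l. apply inv_nonneg, pow_le, pos_INR. apply T_le_P.
     apply Rmult_le_compat_r. apply Px_nonneg, pos_INR. auto.
     apply Rmult_le_compat_l. apply inv_nonneg, pow_le; lra. lra.
   - apply Nat.ltb_ge in E. rewrite Rplus_0_l.
     apply Rle_trans with (/ INR n ^ m * INR n ^ S L).
     apply Rmult_le_compat_l. apply inv_nonneg, pow_le, pos_INR. apply T_le_pow; lia.
     apply real_ineq; auto. lra.
     assert (HN := nat_ineq K n m L E H2L HL3 H6). apply le_INR in HN.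
     rewrite !mult_INR, !pow_INR in HN. exact HN. }
 split.
 - apply cv_lower with (sumR f) K; auto. intros N HN.
   replace N with (K + (N - K))%nat by lia. rewrite sumR_split, HA.
   assert (0 <= sumR (fun i => f (K + i)%nat) (N - K)) by (apply sumR_nonneg; auto). lra.
 - apply cv_upper with (sumR f); auto. intros N.
   apply Rle_trans with (sumR f (K + N)). apply sumR_mono; auto; lia.
   rewrite sumR_split, HA. apply Rplus_le_compat_l.
   apply Rle_trans with (/ y ^ m * sumR (fun i => w (K + i)%nat) N).
   rewrite <- sumR_scal. apply sumR_le. intros i Hi. apply Hpt. lia.
   rewrite Rmult_comm. apply Rmult_le_compat_r. apply inv_nonneg, pow_le; lra.
   apply Rle_trans with (sumR w (K + N)).
   rewrite sumR_split. assert (0 <= sumR w K) by (apply sumR_nonneg; auto). lra.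
   apply Hw.
Qed.

Lemma sum_front g b : sum_f_R0 g (S b) = g 0%nat + sum_f_R0 (fun j => g (S j)) b.
Proof. induction b. simpl; ring. rewrite (tech5 g (S b)), IHb. simpl. ring. Qed.

Lemma sum_split_rev f a b : sum_f_R0 f (a + S b) = sum_f_R0 f a + sum_f_R0 (fun j => f (a + S b - j)%nat) b.
Proof. induction b.
 - rewrite Nat.add_1_r. simpl. replace (S a - 0)%nat with (S a) by lia. ring.
 - replace (a + S (S b))%nat with (S (a + S b)) by lia. rewrite tech5, IHb.
   rewrite (sum_front (fun j => f (S (a + S b) - j)%nat) b).
   replace (S (a + S b) - 0)%nat with (S (a + S b)) by lia.
   rewrite (sum_f_R0_ext (fun j => f (a + S b - j)%nat) (fun j => f (S (a + S b) - S j)%nat)).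
   ring. intros k Hk. f_equal. Qed.

Lemma shift_sum g K : (1 <= K)%nat -> sum_f_R0 (fun i => g (S i)) (K - 1) = sumR g K.
Proof. intros HK. destruct K. lia. replace (S K - 1)%nat with K by lia. clear HK.
 induction K. simpl. ring. rewrite tech5, IHK. reflexivity. Qed.

Lemma target_eq m K : (1 <= K)%nat ->
  sum_f_R0 (fun i => C (2 * (i + 1)) (i + 1) / INR (i + 1) ^ m) (K - 1) = 2 * Aval m K.
Proof. intros HK. assert (Hs := shift_sum (fun n => C (2*n) n / INR n ^ m) K HK). cbv beta in Hs.
 rewrite (sum_f_R0_ext _ (fun i => C (2 * S i) (S i) / INR (S i) ^ m)).
 2: { intros k _. rewrite Nat.add_1_r. reflexivity. }
 rewrite Hs. unfold Aval. rewrite <- sumR_scal. apply sumR_ext. intros n Hn.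
 rewrite <- Pn_C by lia. unfold Rdiv. ring. Qed.

Lemma dual_term m j : (j + 3 <= m)%nat ->
  mzv ((m - (m - 2 - j))%nat :: repeat 1%nat (m - 2 - j)) = mzv ((m - j)%nat :: repeat 1%nat j).
Proof. intros Hj. destruct (conv_direct (m - j) j) as [l Hl]. lia.
 rewrite (mzv_eq _ l Hl). apply mzv_eq.
 assert (H := duality (m - j - 1) (j + 1) l ltac:(lia) ltac:(lia)).
 replace (m - j - 1 + 1)%nat with (m - j)%nat in H by lia. replace (j + 1 - 1)%nat with j in H by lia.
 specialize (H Hl). replace (m - (m - 2 - j))%nat with (j + 1 + 1)%nat by lia.
 replace (m - 2 - j)%nat with (m - j - 1 - 1)%nat by lia. exact H. Qed.

Lemma half m : exists h, (2 * h <= m <= 2 * h + 1)%nat.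
Proof. destruct (Nat.Even_or_Odd m) as [[h Hh]|[h Hh]]; exists h; lia. Qed.

Lemma part1 K : (1 <= K)%nat ->
  exists (B : R) (M : nat), forall m : nat, (M <= m)%nat ->
    Rabs (mzv_height_one_sum m
          - sum_f_R0 (fun i => C (2 * (i + 1)) (i + 1) / (INR (i + 1)) ^ m) (K - 1))
    <= B * / (INR (K + 1)) ^ m.
Proof. intros HK. exists (2 * B0 K), (2 * K + 6)%nat. intros m Hm.
 rewrite target_eq by auto. destruct (half m) as [h Hh].
 remember (h - 1)%nat as L1 eqn:EL1. remember (m - 2 - h)%nat as L2 eqn:EL2.
 unfold mzv_height_one_sum. assert (Hs : (m - 2 = L1 + S L2)%nat) by lia. rewrite Hs.
 rewrite sum_split_rev.
 rewrite (sum_f_R0_ext (fun j => mzv ((m - (L1 + S L2 - j))%nat :: repeat 1%nat (L1 + S L2 - j))) (fun j => mzv ((m - j)%nat :: repeat 1%nat j))).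
 2: { intros j Hj. replace (L1 + S L2 - j)%nat with (m - 2 - j)%nat by (lia). apply dual_term. lia. }
 assert (E1 := est m L1 K ltac:(lia) ltac:(lia) ltac:(lia) ltac:(lia)).
 assert (E2 := est m L2 K ltac:(lia) ltac:(lia) ltac:(lia) ltac:(lia)).
 apply Rabs_le. lra. Qed.

Lemma cv_ev (u v : nat -> R) l N : Un_cv u l -> (forall n, (N <= n)%nat -> u n = v n) -> Un_cv v l.
Proof. intros Hu H e He. destruct (Hu e He) as [N1 HN1]. exists (Nat.max N N1). intros n Hn.
 rewrite <- H by lia. apply HN1; lia. Qed.

Lemma cv_inv_pred : Un_cv (fun m => / INR (m - 1)) 0.
Proof. intros eps He. destruct (INR_archimed 1 (/ eps)) as [N HN]. lra.
 exists (S (S N)). intros n Hn. unfold Rdist. rewrite Rminus_0_r.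
 assert (H1 : INR N + 1 <= INR (n - 1)) by (rewrite <- S_INR; apply le_INR; lia).
 assert (0 < INR N + 1). { assert (0 <= INR N) by apply pos_INR. lra. }
 rewrite Rabs_pos_eq by (apply inv_nonneg; lra).
 apply Rle_lt_trans with (/ (INR N + 1)). apply Rinv_le_contravar; lra.
 rewrite Rmult_1_r in HN. rewrite <- (Rinv_inv eps). apply Rinv_lt_contravar.
 apply Rmult_lt_0_compat. apply Rinv_0_lt_compat; lra. lra. lra. Qed.

Lemma part2 : Un_cv (fun m => (mzv_height_one_sum m / INR (m - 1)) / (2 / INR m)) 1.
Proof.
 destruct (part1 1 ltac:(lia)) as [B [M HB]].
 assert (Hs : Un_cv mzv_height_one_sum 2).
 { intros eps He. destruct (cv_pow_half B eps He) as [N HN]. exists (Nat.max N M). intros n Hn.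
   specialize (HB n ltac:(lia)). specialize (HN n ltac:(lia)). unfold Rdist in *.
   replace (sum_f_R0 (fun i => C (2 * (i + 1)) (i + 1) / INR (i + 1) ^ n) (1 - 1)) with 2 in HB.
   replace (INR (1 + 1)) with 2 in HB by (simpl; ring).
   rewrite Rminus_0_r in HN. eapply Rle_lt_trans. exact HB. eapply Rle_lt_trans. 2: exact HN.
   unfold Rdiv. apply Rle_abs.
   simpl. rewrite pow1. unfold C. simpl. field. }
 apply cv_ev with (fun m => (/ 2 * mzv_height_one_sum m) * (1 + / INR (m - 1))) 2%nat.
 - replace 1 with ((/ 2 * 2) * (1 + 0)) at 1 by field. apply CV_mult.
   apply cv_scal; auto. apply CV_plus. intros e He; exists 0%nat; intros; unfold Rdist; rewrite Rminus_diag, Rabs_R0; auto.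
   apply cv_inv_pred.
 - intros n Hn. assert (1 <= INR (n - 1)) by (apply (le_INR 1); lia).
   replace (INR n) with (INR (n - 1) + 1) by (rewrite <- S_INR; f_equal; lia). field. lra.
Qed.

Theorem corollary4 :
  (forall K : nat, (1 <= K)%nat ->
     exists (B : R) (M : nat), forall m : nat, (M <= m)%nat ->
       Rabs (mzv_height_one_sum m
             - sum_f_R0 (fun i => C (2 * (i + 1)) (i + 1) / (INR (i + 1)) ^ m) (K - 1))
       <= B * / (INR (K + 1)) ^ m)
  /\
  Un_cv (fun m => (mzv_height_one_sum m / INR (m - 1)) / (2 / INR m)) 1.
Proof. split. exact part1. exact part2. Qed.
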